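(* Let $A_1,\dots,A_5$ be five points in the plane, with all subscripts taken modulo $5$, and assume the configuration is nondegenerate, in the sense that every line, intersection point and circle described below exists and is well defined. For $i=1,\dots,5$ define: - $B_{i+3}$ = the intersection point of the lines $A_iA_{i+1}$ and $A_{i+2}A_{i+3}$; - $K_{i+2}$ = the center of the circumcircle of triangle $A_iA_{i+1}B_{i+2}$; - $C_{i+1}$ = the second intersection point (other than $A_{i+1}$) of the circumcircles of triangles $A_iA_{i+1}B_{i+2}$ and $A_{i+1}A_{i+2}B_{i+3}$; - $L_i$ = the center of the circumcircle of triangle $C_{i+1}B_{i+2}B_{i+3}$. Assume that the five points $B_1,\dots,B_5$ lie on a circle with center $O$. The five points $C_1,\dots,C_5$ lie on a circle (Miquel's pentagram theorem); let $J$ be its center. The five lines $K_iL_i$, $i=1,\dots,5$, pass through a common point $X$. Then the points $O$, $J$, $X$ are collinear.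
   Context: Points are in the Euclidean plane; all indices are read modulo 5. *)

(* Defs.v *)
(* Points of the Euclidean plane are pairs of coordinates
   in a real field R (R^2); all statements are polynomial, so any
   realFieldType (in particular the reals) is covered. *)
From HB Require Import structures.
From mathcomp Require Import all_boot all_order all_algebra.
Set Implicit Arguments. Unset Strict Implicit. Unset Printing Implicit Defensive.
Import Order.TTheory GRing.Theory Num.Theory.
Local Open Scope ring_scope.

Definition point (R : realFieldType) := (R * R)%type.

Definition dist2 (R : realFieldType) (p q : point R) : R :=
  (p.1 - q.1) ^+ 2 + (p.2 - q.2) ^+ 2.

Definition collinear (R : realFieldType) (p q r : point R) : Prop :=
  (q.1 - p.1) * (r.2 - p.2) - (q.2 - p.2) * (r.1 - p.1) = 0.

Definition parallel (R : realFieldType) (a b c d : point R) : Prop :=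
  (b.1 - a.1) * (d.2 - c.2) - (b.2 - a.2) * (d.1 - c.1) = 0.

Definition nx (i : 'I_5) (k : nat) : 'I_5 := inZp (i + k).

(* Main.v *)
Require Import Defs.
From HB Require Import structures.
From mathcomp Require Import all_boot all_order all_algebra.
From mathcomp.real_closed Require Import complex.
From mathcomp Require Import ring lra.
Set Implicit Arguments. Unset Strict Implicit. Unset Printing Implicit Defensive.
Import Order.TTheory GRing.Theory Num.Theory.
Local Open Scope ring_scope.

Ltac nz := match goal with
 | |- is_true (?e != 0) =>
   solve [ assumption
         | (apply: mulf_neq0; nz)
         | (apply: invr_neq0; nz)
         | match goal with H : is_true (?e' != 0) |- _ =>
             first [ (rewrite (_ : e = e'); [exact H | ring])
                   | (rewrite (_ : e = - e'); [by rewrite oppr_eq0 | ring]) ]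
           end ]
 end.
Ltac fside := repeat (apply/andP; split); nz.

Section Alg.
Variable F : fieldType.

Definition Af (p q r s : F) := (p * q * (r + s) - r * s * (p + q)) / (p * q - r * s).
Definition Abf (p q r s : F) := (p + q - r - s) / (p * q - r * s).
Definition Kf (v x y p q : F) := v - v * x * y * (v - p) * (v - q) / ((v * x - p * q) * (v * y - p * q)).
Definition Kbf (v x y p q : F) := v^-1 - (v - p) * (v - q) * p * q / (v * (v * x - p * q) * (v * y - p * q)).
Definition Nf (b0 b1 b2 b3 b4 : F) := b0 * b1 * b2 * b3 - b0 * b1 * b2 * b4 + b0 * b1 * b3 * b4 - b0 * b2 * b3 * b4 - b1 * b2 * b3 * b3 + b2 * b2 * b3 * b4.
Definition Df (b0 b1 b2 b3 b4 : F) := b0 * b1 * b3 - b0 * b2 * b4 - b1 * b2 * b4 - b1 * b3 * b3 + b1 * b3 * b4 + b2 * b2 * b4.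
Definition Nbf (b0 b1 b2 b3 b4 : F) := b0 * b1 * b3 - b0 * b2 * b4 - b1 * b2 * b3 + b2 * b2 * b3 - b2 * b3 * b3 + b2 * b3 * b4.
Definition Dbf (b0 b1 b2 b3 b4 : F) := b0 * b1 * b3 * b3 + b0 * b2 * b2 * b3 - b0 * b2 * b2 * b4 - b0 * b2 * b3 * b3 - b1 * b2 * b3 * b3 + b2 * b2 * b3 * b4.
Definition Lf (b1 b2 b3 b4 : F) := b2 * b3 * (b1 * b3 - b2 * b4) / (b1 * b3 * b3 - b2 * b2 * b4).
Definition Lbf (b1 b2 b3 b4 : F) := (b1 * b3 - b2 * b4) / (b1 * b3 * b3 - b2 * b2 * b4).
Definition pt (b0 b1 b2 b3 b4 : F) := b1 * b1 * b2 * b3 * b3 * b4 - b1 * b2 * b2 * b3 * b4 * b4.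
Definition qt (b0 b1 b2 b3 b4 : F) := b1 * b4 * (b2 + b3) * (b1 * b3 - b2 * b4).
Definition xt (b0 b1 b2 b3 b4 : F) := b1 * b4 * (b1 * b3 * b3 - b2 * b2 * b4).
Definition pbt (b0 b1 b2 b3 b4 : F) := b0 * b0 * (b2 * b4 - b1 * b3).
Definition cyc (t : F -> F -> F -> F -> F -> F) (b0 b1 b2 b3 b4 : F) :=
  t b0 b1 b2 b3 b4 + t b1 b2 b3 b4 b0 + t b2 b3 b4 b0 b1 + t b3 b4 b0 b1 b2 + t b4 b0 b1 b2 b3.
Definition Pf := cyc pt. Definition Qf := cyc qt. Definition QXf := cyc xt. Definition Pbf := cyc pbt.
Definition Sf b0 b1 b2 b3 b4 := Qf b0 b1 b2 b3 b4 - QXf b0 b1 b2 b3 b4.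

Lemma cyc_rot t (b0 b1 b2 b3 b4 : F) : cyc t b1 b2 b3 b4 b0 = cyc t b0 b1 b2 b3 b4.
Proof. rewrite /cyc; ring. Qed.

(* K_j equidistant from A_{j-2}, A_{j-1}, B_j *)
Lemma KEQ (b0 b1 b2 b3 b4 : F) : b0 != 0 -> b1 != 0 -> b2 != 0 -> b3 != 0 -> b4 != 0 ->
  b3 * b0 - b4 * b1 != 0 -> b4 * b1 - b0 * b2 != 0 ->
  (Kf b0 b3 b2 b4 b1 - Af b3 b0 b4 b1) * (Kbf b0 b3 b2 b4 b1 - Abf b3 b0 b4 b1) = (Kf b0 b3 b2 b4 b1 - b0) * (Kbf b0 b3 b2 b4 b1 - b0^-1) /\
  (Kf b0 b3 b2 b4 b1 - Af b4 b1 b0 b2) * (Kbf b0 b3 b2 b4 b1 - Abf b4 b1 b0 b2) = (Kf b0 b3 b2 b4 b1 - b0) * (Kbf b0 b3 b2 b4 b1 - b0^-1).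
Proof.
move=> *; rewrite /Kf /Kbf /Af /Abf; split; field; fside.
Qed.

Lemma KD (b0 b1 b2 b3 b4 : F) : b0 != 0 -> b1 != 0 -> b2 != 0 -> b3 != 0 -> b4 != 0 ->
  b4 * b1 - b0 * b2 != 0 -> b1 * b3 - b2 * b4 != 0 -> b0 * b2 - b1 * b3 != 0 ->
  (Kbf b2 b0 b4 b1 b3 - Kbf b1 b4 b3 b0 b2) * ((b4 * b1 - b0 * b2) * (b4 * b2 - b1 * b3) * (b0 * b2 - b1 * b3))
    = (b1 - b2) * b4 * Df b4 b0 b1 b2 b3 /\
  (Kf b2 b0 b4 b1 b3 - Kf b1 b4 b3 b0 b2) * ((b4 * b1 - b0 * b2) * (b4 * b2 - b1 * b3) * (b0 * b2 - b1 * b3))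
    = (b1 - b2) * b0 * b3 * Dbf b4 b0 b1 b2 b3.
Proof.
move=> *; rewrite /Kf /Kbf /Df /Dbf; split; field; fside.
Qed.

Lemma CFORM (b0 b1 b2 b3 b4 : F) : b0 != 0 -> b1 != 0 -> b2 != 0 -> b3 != 0 -> b4 != 0 ->
  b4 * b1 - b0 * b2 != 0 -> b1 * b3 - b2 * b4 != 0 -> b0 * b2 - b1 * b3 != 0 ->
  Df b4 b0 b1 b2 b3 != 0 -> Dbf b4 b0 b1 b2 b3 != 0 ->
  (Nf b4 b0 b1 b2 b3 / Df b4 b0 b1 b2 b3 - Kf b1 b4 b3 b0 b2) * (Kbf b2 b0 b4 b1 b3 - Kbf b1 b4 b3 b0 b2)
   = (Abf b0 b2 b1 b3 - Kbf b1 b4 b3 b0 b2) * (Kf b2 b0 b4 b1 b3 - Kf b1 b4 b3 b0 b2) /\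
  (Nbf b4 b0 b1 b2 b3 / Dbf b4 b0 b1 b2 b3 - Kbf b1 b4 b3 b0 b2) * (Kf b2 b0 b4 b1 b3 - Kf b1 b4 b3 b0 b2)
   = (Af b0 b2 b1 b3 - Kf b1 b4 b3 b0 b2) * (Kbf b2 b0 b4 b1 b3 - Kbf b1 b4 b3 b0 b2).
Proof.
move=> *; rewrite /Kf /Kbf /Af /Abf /Nf /Df /Nbf /Dbf; split; field; fside.
Qed.

Lemma LEQ (b0 b1 b2 b3 b4 : F) : b0 != 0 -> b1 != 0 -> b2 != 0 -> b3 != 0 -> b4 != 0 ->
  Df b0 b1 b2 b3 b4 != 0 -> Dbf b0 b1 b2 b3 b4 != 0 ->
  b2 * b3 * (b1 * b3 - b2 * b4) * (b3^-1 - Nbf b0 b1 b2 b3 b4 / Dbf b0 b1 b2 b3 b4)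
   + (b1 * b3 - b2 * b4) * (b3 - Nf b0 b1 b2 b3 b4 / Df b0 b1 b2 b3 b4)
   + (b1 * b3 * b3 - b2 * b2 * b4) * (Nf b0 b1 b2 b3 b4 / Df b0 b1 b2 b3 b4 * (Nbf b0 b1 b2 b3 b4 / Dbf b0 b1 b2 b3 b4) - b3 * b3^-1) = 0.
Proof.
move=> *; rewrite /Nf /Nbf /Df /Dbf.
field; fside.
Qed.

Lemma LEQ2 (b1 b2 b3 b4 : F) : b2 != 0 -> b3 != 0 ->
  b2 * b3 * (b1 * b3 - b2 * b4) * (b3^-1 - b2^-1)
   + (b1 * b3 - b2 * b4) * (b3 - b2)
   + (b1 * b3 * b3 - b2 * b2 * b4) * (b2 * b2^-1 - b3 * b3^-1) = 0.
Proof. by move=> *; field; fside. Qed.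

Lemma CI1 (b0 b1 b2 b3 b4 : F) :
  Nf b0 b1 b2 b3 b4 * Qf b0 b1 b2 b3 b4 - Pf b0 b1 b2 b3 b4 * Df b0 b1 b2 b3 b4
  = Sf b0 b1 b2 b3 b4 * Dbf b0 b1 b2 b3 b4.
Proof. rewrite /Sf /Nf /Qf /Pf /Df /QXf /Dbf /cyc /pt /qt /xt. ring. Qed.

Lemma CI2 (b0 b1 b2 b3 b4 : F) :
  Nbf b0 b1 b2 b3 b4 * Qf b0 b1 b2 b3 b4 + Pbf b0 b1 b2 b3 b4 * Dbf b0 b1 b2 b3 b4
  = Sf b0 b1 b2 b3 b4 * Df b0 b1 b2 b3 b4.
Proof. rewrite /Sf /Nbf /Qf /Pbf /Df /QXf /Dbf /cyc /pbt /qt /xt. ring. Qed.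

Lemma DI (b0 b1 b2 b3 b4 : F) :
  [/\ Nf b0 b1 b2 b3 b4 * Df b4 b0 b1 b2 b3 - Nf b4 b0 b1 b2 b3 * Df b0 b1 b2 b3 b4
      = Sf b0 b1 b2 b3 b4 * ((b1 - b2) * (b2 - b3)),
   Nbf b0 b1 b2 b3 b4 * Dbf b4 b0 b1 b2 b3 - Nbf b4 b0 b1 b2 b3 * Dbf b0 b1 b2 b3 b4
      = - (Sf b0 b1 b2 b3 b4 * ((b1 - b2) * (b2 - b3))),
   Nf b1 b2 b3 b4 b0 * Df b4 b0 b1 b2 b3 - Nf b4 b0 b1 b2 b3 * Df b1 b2 b3 b4 b0
      = - (Sf b0 b1 b2 b3 b4 * ((b1 - b4) * (b2 - b3))) &
   Nbf b1 b2 b3 b4 b0 * Dbf b4 b0 b1 b2 b3 - Nbf b4 b0 b1 b2 b3 * Dbf b1 b2 b3 b4 b0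
      = Sf b0 b1 b2 b3 b4 * ((b1 - b4) * (b2 - b3))].
Proof. rewrite /Sf /Nf /Nbf /Qf /Df /QXf /Dbf /cyc /qt /xt. split; ring. Qed.

Lemma XI (b0 b1 b2 b3 b4 : F) : b0 != 0 -> b1 != 0 -> b2 != 0 -> b3 != 0 -> b4 != 0 ->
  b3 * b0 - b4 * b1 != 0 -> b4 * b1 - b0 * b2 != 0 -> b1 * b3 * b3 - b2 * b2 * b4 != 0 ->
  Pf b0 b1 b2 b3 b4 - Kf b0 b3 b2 b4 b1 * QXf b0 b1 b2 b3 b4 =
    (b0 - b1) * (b0 - b4) * (b1 * b3 * b3 - b2 * b2 * b4) * (Lf b1 b2 b3 b4 - Kf b0 b3 b2 b4 b1) /\
  - Pbf b0 b1 b2 b3 b4 - Kbf b0 b3 b2 b4 b1 * QXf b0 b1 b2 b3 b4 =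
    (b0 - b1) * (b0 - b4) * (b1 * b3 * b3 - b2 * b2 * b4) * (Lbf b1 b2 b3 b4 - Kbf b0 b3 b2 b4 b1).
Proof.
move=> *; rewrite /Pf /Pbf /Kf /Kbf /QXf /Lf /Lbf /cyc /pt /pbt /xt; split; field; fside.
Qed.


Definition cF (z1 w1 z2 w2 z3 w3 : F) := (z2 - z1) * (w3 - w1) - (w2 - w1) * (z3 - z1).
Definition dF (z1 w1 z2 w2 : F) := (z1 - z2) * (w1 - w2).

Lemma dF_sym z1 w1 z2 w2 : dF z1 w1 z2 w2 = dF z2 w2 z1 w1.
Proof. rewrite /dF; ring. Qed.

Lemma line_eq (a ab p q : F) : p != q -> p != 0 -> q != 0 ->
  cF a ab p p^-1 q q^-1 = 0 -> a + p * q * ab = p + q.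
Proof.
move=> hpq hp hq H.
have E : cF a ab p p^-1 q q^-1 = (p - q) / (p * q) * (p + q - p * q * ab - a).
  by rewrite /cF; field; fside.
move: H; rewrite E => /eqP; rewrite mulf_eq0 => /orP[|/eqP H].
  by rewrite mulf_eq0 invr_eq0 mulf_eq0 subr_eq0 (negbTE hpq) (negbTE hp) (negbTE hq).
by apply/eqP; rewrite -subr_eq0; apply/eqP; rewrite -oppr0 -H; ring.
Qed.

Lemma A_solve (a ab p q r s : F) : p != r -> p != s -> q != r -> q != s ->
  a + p * q * ab = p + q -> a + r * s * ab = r + s ->
  [/\ p * q - r * s != 0, a = Af p q r s & ab = Abf p q r s].
Proof.
move=> hpr hps hqr hqs h1 h2.
have hne : p * q - r * s != 0.
  apply/negP => /eqP e.
  have e' : r * s = p * q by apply/eqP; rewrite eq_sym -subr_eq0 e.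
  have e2 : p + q - (r + s) = 0 by rewrite -h1 -h2 e'; ring.
  have : (p - r) * (p - s) = 0.
    rewrite (_ : (p - r) * (p - s) = p * (p + q - (r + s)) - (p * q - r * s)); last by ring.
    by rewrite e2 e mulr0 subr0.
  by move/eqP; rewrite mulf_eq0 !subr_eq0 (negbTE hpr) (negbTE hps).
have hab : ab = Abf p q r s.
  rewrite /Abf; apply: (mulIf hne); rewrite mulfVK //.
  apply/eqP; rewrite -subr_eq0; apply/eqP.
  rewrite (_ : ab * (p * q - r * s) - (p + q - r - s) = (a + p * q * ab - (p + q)) - (a + r * s * ab - (r + s))); last by ring.
  by rewrite h1 h2 !subrr.
split => //.
have -> : a = p + q - p * q * ab by rewrite -h1; ring.
by rewrite hab /Abf /Af; field.
Qed.

Lemma cc_uniq (P Pb Q Qb Rr Rb x y x' y' : F) : cF P Pb Q Qb Rr Rb != 0 ->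
  dF x y P Pb = dF x y Rr Rb -> dF x y Q Qb = dF x y Rr Rb ->
  dF x' y' P Pb = dF x' y' Rr Rb -> dF x' y' Q Qb = dF x' y' Rr Rb -> x = x' /\ y = y'.
Proof.
rewrite /dF => hc h1 h2 h3 h4.
have e1 : (x - x') * (Rb - Pb) + (y - y') * (Rr - P) = 0.
  transitivity (((x - P) * (y - Pb) - (x - Rr) * (y - Rb)) - ((x' - P) * (y' - Pb) - (x' - Rr) * (y' - Rb))); first by ring.
  by rewrite h1 h3 !subrr.
have e2 : (x - x') * (Rb - Qb) + (y - y') * (Rr - Q) = 0.
  transitivity (((x - Q) * (y - Qb) - (x - Rr) * (y - Rb)) - ((x' - Q) * (y' - Qb) - (x' - Rr) * (y' - Rb))); first by ring.
  by rewrite h2 h4 !subrr.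
have d1 : (x - x') * cF P Pb Q Qb Rr Rb = 0.
  transitivity ((Rr - P) * ((x - x') * (Rb - Qb) + (y - y') * (Rr - Q)) - (Rr - Q) * ((x - x') * (Rb - Pb) + (y - y') * (Rr - P))); first by rewrite /cF; ring.
  by rewrite e1 e2 !mulr0 subrr.
have d2 : (y - y') * cF P Pb Q Qb Rr Rb = 0.
  transitivity ((Rb - Qb) * ((x - x') * (Rb - Pb) + (y - y') * (Rr - P)) - (Rb - Pb) * ((x - x') * (Rb - Qb) + (y - y') * (Rr - Q))); first by rewrite /cF; ring.
  by rewrite e1 e2 !mulr0 subrr.
move/eqP: d1; rewrite mulf_eq0 (negbTE hc) orbF subr_eq0 => /eqP ->.
move/eqP: d2; rewrite mulf_eq0 (negbTE hc) orbF subr_eq0 => /eqP ->.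
by [].
Qed.

Lemma cc_hom (P Pb Q Qb Rr Rb x y X Y T : F) : cF P Pb Q Qb Rr Rb != 0 ->
  dF x y P Pb = dF x y Rr Rb -> dF x y Q Qb = dF x y Rr Rb ->
  X * (Rb - Pb) + Y * (Rr - P) + T * (P * Pb - Rr * Rb) = 0 ->
  X * (Rb - Qb) + Y * (Rr - Q) + T * (Q * Qb - Rr * Rb) = 0 ->
  Y != 0 -> [/\ T != 0, x = X / T & y = Y / T].
Proof.
rewrite /dF => hc h1 h2 e1 e2 hY.
have hT : T != 0.
  apply/negP => /eqP hT; move: e1 e2; rewrite hT !mul0r !addr0 => e1 e2.
  have : Y * cF P Pb Q Qb Rr Rb = 0.
    transitivity ((Rb - Qb) * (X * (Rb - Pb) + Y * (Rr - P)) - (Rb - Pb) * (X * (Rb - Qb) + Y * (Rr - Q))); first by rewrite /cF; ring.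
    by rewrite e1 e2 !mulr0 subrr.
  by move/eqP; rewrite mulf_eq0 (negbTE hY) (negbTE hc).
have f1 : (x * T - X) * (Rb - Pb) + (y * T - Y) * (Rr - P) = 0.
  transitivity (T * ((x - P) * (y - Pb) - (x - Rr) * (y - Rb)) + (X * (Rb - Pb) + Y * (Rr - P) + T * (P * Pb - Rr * Rb)) * (-1)); first by ring.
  by rewrite h1 e1 subrr mulr0 mul0r addr0.
have f2 : (x * T - X) * (Rb - Qb) + (y * T - Y) * (Rr - Q) = 0.
  transitivity (T * ((x - Q) * (y - Qb) - (x - Rr) * (y - Rb)) + (X * (Rb - Qb) + Y * (Rr - Q) + T * (Q * Qb - Rr * Rb)) * (-1)); first by ring.
  by rewrite h2 e2 subrr mulr0 mul0r addr0.
have d1 : (x * T - X) * cF P Pb Q Qb Rr Rb = 0.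
  transitivity ((Rr - P) * ((x * T - X) * (Rb - Qb) + (y * T - Y) * (Rr - Q)) - (Rr - Q) * ((x * T - X) * (Rb - Pb) + (y * T - Y) * (Rr - P))); first by rewrite /cF; ring.
  by rewrite f1 f2 !mulr0 subrr.
have d2 : (y * T - Y) * cF P Pb Q Qb Rr Rb = 0.
  transitivity ((Rb - Qb) * ((x * T - X) * (Rb - Pb) + (y * T - Y) * (Rr - P)) - (Rb - Pb) * ((x * T - X) * (Rb - Qb) + (y * T - Y) * (Rr - Q))); first by rewrite /cF; ring.
  by rewrite f1 f2 !mulr0 subrr.
move/eqP: d1; rewrite mulf_eq0 (negbTE hc) orbF subr_eq0 => /eqP hx.
move/eqP: d2; rewrite mulf_eq0 (negbTE hc) orbF subr_eq0 => /eqP hy.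
split => //; [rewrite -hx | rewrite -hy]; by rewrite mulfK.
Qed.

Lemma circ2 (k kb k' kb' a ab c cb : F) : k' - k != 0 -> kb' - kb != 0 ->
  dF k kb c cb = dF k kb a ab -> dF k' kb' c cb = dF k' kb' a ab -> c != a ->
  (c - k) * (kb' - kb) = (ab - kb) * (k' - k) /\ (cb - kb) * (k' - k) = (a - k) * (kb' - kb).
Proof.
rewrite /dF => h1 h2 e1 e2 hca.
have E1 : (c - a) * (cb - ab) + (c - a) * (ab - kb) + (cb - ab) * (a - k) = 0.
  transitivity ((k - c) * (kb - cb) - (k - a) * (kb - ab)); first by ring.
  by rewrite e1 subrr.
have E2 : (c - a) * (cb - ab) + (c - a) * (ab - kb') + (cb - ab) * (a - k') = 0.
  transitivity ((k' - c) * (kb' - cb) - (k' - a) * (kb' - ab)); first by ring.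
  by rewrite e2 subrr.
have E3 : (c - a) * (kb' - kb) + (cb - ab) * (k' - k) = 0.
  transitivity (((c - a) * (cb - ab) + (c - a) * (ab - kb) + (cb - ab) * (a - k)) - ((c - a) * (cb - ab) + (c - a) * (ab - kb') + (cb - ab) * (a - k'))); first by ring.
  by rewrite E1 E2 subrr.
have G : (c - a) * ((ab - kb) * (k' - k) - (c - k) * (kb' - kb)) = 0.
  transitivity ((k' - k) * ((c - a) * (cb - ab) + (c - a) * (ab - kb) + (cb - ab) * (a - k)) - (c - k) * ((c - a) * (kb' - kb) + (cb - ab) * (k' - k))); first by ring.
  by rewrite E1 E3 !mulr0 subrr.
move/eqP: G; rewrite mulf_eq0 subr_eq0 (negbTE hca) /= subr_eq0 => /eqP G.
split; first by rewrite G.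
apply/eqP; rewrite -subr_eq0; apply/eqP.
transitivity ((c - a) * (kb' - kb) + (cb - ab) * (k' - k) - ((c - k) * (kb' - kb) - (ab - kb) * (k' - k))); first by ring.
by rewrite E3 G subrr subr0.
Qed.

Lemma line_uniq (k1 kb1 l1 lb1 k2 kb2 l2 lb2 x xb x' xb' : F) :
  (l1 - k1) * (lb2 - kb2) - (lb1 - kb1) * (l2 - k2) != 0 ->
  cF k1 kb1 l1 lb1 x xb = 0 -> cF k2 kb2 l2 lb2 x xb = 0 ->
  cF k1 kb1 l1 lb1 x' xb' = 0 -> cF k2 kb2 l2 lb2 x' xb' = 0 -> x = x' /\ xb = xb'.
Proof.
rewrite /cF => hp h1 h2 h3 h4.
have e1 : (l1 - k1) * (xb - xb') - (lb1 - kb1) * (x - x') = 0.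
  transitivity (((l1 - k1) * (xb - kb1) - (lb1 - kb1) * (x - k1)) - ((l1 - k1) * (xb' - kb1) - (lb1 - kb1) * (x' - k1))); first by ring.
  by rewrite h1 h3 subrr.
have e2 : (l2 - k2) * (xb - xb') - (lb2 - kb2) * (x - x') = 0.
  transitivity (((l2 - k2) * (xb - kb2) - (lb2 - kb2) * (x - k2)) - ((l2 - k2) * (xb' - kb2) - (lb2 - kb2) * (x' - k2))); first by ring.
  by rewrite h2 h4 subrr.
have d1 : (x - x') * ((l1 - k1) * (lb2 - kb2) - (lb1 - kb1) * (l2 - k2)) = 0.
  transitivity ((l2 - k2) * ((l1 - k1) * (xb - xb') - (lb1 - kb1) * (x - x')) - (l1 - k1) * ((l2 - k2) * (xb - xb') - (lb2 - kb2) * (x - x'))); first by ring.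
  by rewrite e1 e2 !mulr0 subrr.
have d2 : (xb - xb') * ((l1 - k1) * (lb2 - kb2) - (lb1 - kb1) * (l2 - k2)) = 0.
  transitivity ((lb2 - kb2) * ((l1 - k1) * (xb - xb') - (lb1 - kb1) * (x - x')) - (lb1 - kb1) * ((l2 - k2) * (xb - xb') - (lb2 - kb2) * (x - x'))); first by ring.
  by rewrite e1 e2 !mulr0 subrr.
move/eqP: d1; rewrite mulf_eq0 (negbTE hp) orbF subr_eq0 => /eqP ->.
move/eqP: d2; rewrite mulf_eq0 (negbTE hp) orbF subr_eq0 => /eqP ->.
by [].
Qed.



Lemma Qnz (ca cab cb cbb cc ccb Da Db Dc Dba Dbb Dbc P Q S g1 g2 : F) :
  Da != 0 -> Db != 0 -> Dc != 0 -> Dba != 0 -> Dbb != 0 -> Dbc != 0 ->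
  (cb - ca) * (Da * Db) = S * g1 -> (cbb - cab) * (Dba * Dbb) = - (S * g1) ->
  (cc - ca) * (Da * Dc) = S * g2 -> (ccb - cab) * (Dba * Dbc) = - (S * g2) ->
  (cb * Q - P) * Db = S * Dbb -> (cc * Q - P) * Dc = S * Dbc ->
  cF ca cab cb cbb cc ccb != 0 -> Q != 0.
Proof.
move=> ? ? ? ? ? ? h1 h2 h3 h4 hb hc hcf.
apply/negP => /eqP hQ.
have E : cF ca cab cb cbb cc ccb * (Da * Db * Dc * Dba * Dbb * Dbc) =
  ((cb - ca) * (Da * Db)) * ((ccb - cab) * (Dba * Dbc)) * Dbb * Dc - ((cbb - cab) * (Dba * Dbb)) * ((cc - ca) * (Da * Dc)) * Db * Dbc.
  by rewrite /cF; ring.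
rewrite h1 h2 h3 h4 in E.
have s1 : S * Dbb = - P * Db by rewrite -hb hQ; ring.
have s2 : S * Dbc = - P * Dc by rewrite -hc hQ; ring.
have E2 : (S * g1) * - (S * g2) * Dbb * Dc - - (S * g1) * (S * g2) * Db * Dbc = - (S * g1 * g2) * ((S * Dbb) * Dc - Db * (S * Dbc)) by ring.
rewrite E2 s1 s2 in E.
have : cF ca cab cb cbb cc ccb * (Da * Db * Dc * Dba * Dbb * Dbc) = 0 by rewrite E; ring.
move/eqP; rewrite mulf_eq0 (negbTE hcf) /=.
by apply/negP; nz.
Qed.

Lemma QXnz (k1 kb1 l1 lb1 k2 kb2 l2 lb2 P Pb QX lam1 lam2 : F) : lam1 != 0 -> lam2 != 0 ->
  P - k1 * QX = lam1 * (l1 - k1) -> - Pb - kb1 * QX = lam1 * (lb1 - kb1) ->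
  P - k2 * QX = lam2 * (l2 - k2) -> - Pb - kb2 * QX = lam2 * (lb2 - kb2) ->
  (l1 - k1) * (lb2 - kb2) - (lb1 - kb1) * (l2 - k2) != 0 -> QX != 0.
Proof.
move=> hl1 hl2 e1 e2 e3 e4 hp; apply/negP => /eqP hQ.
move: e1 e2 e3 e4; rewrite hQ !mulr0 !subr0 => e1 e2 e3 e4.
have : ((l1 - k1) * (lb2 - kb2) - (lb1 - kb1) * (l2 - k2)) * (lam1 * lam2) = 0.
  transitivity ((lam1 * (l1 - k1)) * (lam2 * (lb2 - kb2)) - (lam1 * (lb1 - kb1)) * (lam2 * (l2 - k2))); first by ring.
  by rewrite -e1 -e2 -e3 -e4; ring.
by move/eqP; rewrite mulf_eq0 (negbTE hp) mulf_eq0 (negbTE hl1) (negbTE hl2).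
Qed.

Lemma Jform (c cb D Db P Pb Q S : F) : Q != 0 -> D != 0 -> Db != 0 ->
  (c * Q - P) * D = S * Db -> (cb * Q + Pb) * Db = S * D ->
  dF (P / Q) (- Pb / Q) c cb = S ^+ 2 / Q ^+ 2.
Proof.
move=> hQ hD hDb e1 e2.
have e1' : c * Q - P = S * Db / D by rewrite -e1 mulfK.
have e2' : cb * Q + Pb = S * D / Db by rewrite -e2 mulfK.
transitivity ((c * Q - P) * (cb * Q + Pb) / Q ^+ 2); first by rewrite /dF; field; fside.
by rewrite e1' e2'; field; fside.
Qed.

Lemma Xform (k kb l lb P Pb QX lam : F) : QX != 0 ->
  P - k * QX = lam * (l - k) -> - Pb - kb * QX = lam * (lb - kb) ->
  cF k kb l lb (P / QX) (- Pb / QX) = 0.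
Proof.
move=> hQ e1 e2.
transitivity ((l - k) * (- Pb - kb * QX) / QX - (lb - kb) * (P - k * QX) / QX); first by rewrite /cF; field; fside.
by rewrite e1 e2; field; fside.
Qed.

Lemma OJX (P Pb Q QX : F) : Q != 0 -> QX != 0 ->
  cF 0 0 (P / Q) (- Pb / Q) (P / QX) (- Pb / QX) = 0.
Proof. by move=> *; rewrite /cF; field; fside. Qed.

End Alg.


Lemma nxv (i : 'I_5) k : val (nx i k) = ((i + k) %% 5)%N.
Proof. by []. Qed.

Lemma nxE (i : 'I_5) a b : nx (nx i a) b = nx i ((a + b) %% 5)%N.
Proof. apply: val_inj; rewrite !nxv modnDml modnDmr addnA. by []. Qed.

Lemma nx0 (i : 'I_5) : nx i 0 = i.
Proof. apply: val_inj; rewrite nxv addn0 modn_small //. Qed.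


Lemma nxS (i : 'I_5) k : nx i k.+1 = nx (nx i k) 1.
Proof. by apply: val_inj; rewrite !nxv modnDml -addnA addn1. Qed.

Lemma nx_ord0 (j : 'I_5) : nx ord0 j = j.
Proof. by apply: val_inj; rewrite nxv add0n modn_small. Qed.

Lemma nx_neq (j : 'I_5) a b : (a < 5)%N -> (b < 5)%N -> a != b -> nx j a != nx j b.
Proof.
move=> ha hb hab; apply/negP => /eqP/(congr1 val); rewrite !nxv => /eqP.
by rewrite eqn_modDl !modn_small // (negbTE hab).
Qed.

Lemma ord5_cases (a c : 'I_5) : a != c -> [\/ c = nx a 1, c = nx a 2, a = nx c 1 | a = nx c 2].
Proof.
have key : forall a c : 'I_5, (a != c) -> [|| c == nx a 1, c == nx a 2, a == nx c 1 | a == nx c 2].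
  by move=> [[|[|[|[|[|x]]]]] hx] [[|[|[|[|[|y]]]]] hy].
move/key.
by case/or4P => /eqP; [constructor 1 | constructor 2 | constructor 3 | constructor 4].
Qed.

Lemma cyc_idx (F : fieldType) (t : F -> F -> F -> F -> F -> F) (be : 'I_5 -> F) (j : 'I_5) :
  cyc t (be (nx j 0)) (be (nx j 1)) (be (nx j 2)) (be (nx j 3)) (be (nx j 4))
  = cyc t (be (nx ord0 0)) (be (nx ord0 1)) (be (nx ord0 2)) (be (nx ord0 3)) (be (nx ord0 4)).
Proof.
rewrite -[in LHS](nx_ord0 j); move: (val j) => n.
elim: n => [//|n IH]; rewrite nxS; move: (nx ord0 n) IH => m IH.
rewrite !nxE /= -IH; exact: cyc_rot.
Qed.

Section Real.
Variable R : realFieldType.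
Implicit Types p q s a b c d o : point R.

Lemma dist2_eq0 p q : dist2 p q = 0 -> p = q.
Proof.
rewrite /dist2 => /eqP; rewrite paddr_eq0 ?sqr_ge0 // => /andP[].
rewrite !sqrf_eq0 !subr_eq0 => /eqP h1 /eqP h2.
by case: p q h1 h2 => [x y] [x' y'] /= -> ->.
Qed.

Lemma col_21 p q s : collinear p q s -> collinear q p s.
Proof. rewrite /collinear => H; rewrite -[RHS]oppr0 -H; ring. Qed.
Lemma col_13 p q s : collinear p q s -> collinear p s q.
Proof. rewrite /collinear => H; rewrite -[RHS]oppr0 -H; ring. Qed.
Lemma col_231 p q s : collinear p q s -> collinear q s p.
Proof. rewrite /collinear => H; rewrite -H; ring. Qed.
Lemma col_312 p q s : collinear p q s -> collinear s p q.
Proof. rewrite /collinear => H; rewrite -H; ring. Qed.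
Lemma col_eq12 p s : collinear p p s.
Proof. rewrite /collinear; ring. Qed.
Lemma col_eq23 p s : collinear s p p.
Proof. rewrite /collinear; ring. Qed.

Lemma col_trans p q r s : p <> q -> collinear p q r -> collinear p q s -> collinear p r s.
Proof.
rewrite /collinear => hpq h1 h2.
set X := (r.1 - p.1) * (s.2 - p.2) - (r.2 - p.2) * (s.1 - p.1).
have e1 : (q.1 - p.1) * X = 0.
  transitivity ((r.1 - p.1) * ((q.1 - p.1) * (s.2 - p.2) - (q.2 - p.2) * (s.1 - p.1)) - (s.1 - p.1) * ((q.1 - p.1) * (r.2 - p.2) - (q.2 - p.2) * (r.1 - p.1))); first by rewrite /X; ring.
  by rewrite h1 h2 !mulr0 subrr.
have e2 : (q.2 - p.2) * X = 0.
  transitivity ((r.2 - p.2) * ((q.1 - p.1) * (s.2 - p.2) - (q.2 - p.2) * (s.1 - p.1)) - (s.2 - p.2) * ((q.1 - p.1) * (r.2 - p.2) - (q.2 - p.2) * (r.1 - p.1))); first by rewrite /X; ring.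
  by rewrite h1 h2 !mulr0 subrr.
have [//|hX] := eqVneq X 0; exfalso.
move/eqP: e1; rewrite mulf_eq0 (negbTE hX) orbF subr_eq0 => /eqP e1.
move/eqP: e2; rewrite mulf_eq0 (negbTE hX) orbF subr_eq0 => /eqP e2.
by apply: hpq; case: p q e1 e2 {h1 h2 X hX} => [x y] [x' y'] /= -> ->.
Qed.

Lemma col_uniq a b c p : ~ collinear a b c -> collinear a b p -> collinear b c p -> p = b.
Proof.
rewrite /collinear => hn h1 h2.
set cr := (b.1 - a.1) * (c.2 - b.2) - (b.2 - a.2) * (c.1 - b.1).
have hcr : cr != 0.
  apply/negP => /eqP e; apply: hn; rewrite -e /cr; ring.
have e1 : (p.1 - b.1) * cr = 0.
  transitivity ((c.1 - b.1) * ((b.1 - a.1) * (p.2 - a.2) - (b.2 - a.2) * (p.1 - a.1)) - (b.1 - a.1) * ((c.1 - b.1) * (p.2 - b.2) - (c.2 - b.2) * (p.1 - b.1))); first by rewrite /cr; ring.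
  by rewrite h1 h2 !mulr0 subrr.
have e2 : (p.2 - b.2) * cr = 0.
  transitivity ((c.2 - b.2) * ((b.1 - a.1) * (p.2 - a.2) - (b.2 - a.2) * (p.1 - a.1)) - (b.2 - a.2) * ((c.1 - b.1) * (p.2 - b.2) - (c.2 - b.2) * (p.1 - b.1))); first by rewrite /cr; ring.
  by rewrite h1 h2 !mulr0 subrr.
move/eqP: e1; rewrite mulf_eq0 (negbTE hcr) orbF subr_eq0 => /eqP e1.
move/eqP: e2; rewrite mulf_eq0 (negbTE hcr) orbF subr_eq0 => /eqP e2.
by case: p b e1 e2 {h1 h2 cr hcr hn} => [x y] [x' y'] /= -> ->.
Qed.

Lemma circumcenter_ex p q s : ~ collinear p q s ->
  exists o, dist2 o p = dist2 o s /\ dist2 o q = dist2 o s.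
Proof.
rewrite /collinear /dist2 => hn.
set a1 := 2 * (s.1 - p.1); set b1 := 2 * (s.2 - p.2); set c1 := s.1 ^+ 2 + s.2 ^+ 2 - p.1 ^+ 2 - p.2 ^+ 2.
set a2 := 2 * (s.1 - q.1); set b2 := 2 * (s.2 - q.2); set c2 := s.1 ^+ 2 + s.2 ^+ 2 - q.1 ^+ 2 - q.2 ^+ 2.
have hd : a1 * b2 - a2 * b1 != 0.
  apply/negP => /eqP e; apply: hn.
  have : 4 * ((q.1 - p.1) * (s.2 - p.2) - (q.2 - p.2) * (s.1 - p.1)) = 0 by rewrite -e /a1 /b1 /a2 /b2; ring.
  by move/eqP; rewrite mulf_eq0 pnatr_eq0 /= => /eqP.
exists ((c1 * b2 - c2 * b1) / (a1 * b2 - a2 * b1), (a1 * c2 - a2 * c1) / (a1 * b2 - a2 * b1)) => /=.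
by split; rewrite /a1 /b1 /c1 /a2 /b2 /c2 in hd *; field.
Qed.

Lemma inter_ex a b c d : ~ parallel a b c d ->
  exists x, collinear a b x /\ collinear c d x.
Proof.
rewrite /parallel /collinear => hn.
set u1 := b.1 - a.1; set u2 := b.2 - a.2; set v1 := d.1 - c.1; set v2 := d.2 - c.2.
have hd : u1 * v2 - u2 * v1 != 0 by apply/negP => /eqP e; apply: hn.
set t := (v1 * (a.2 - c.2) - v2 * (a.1 - c.1)) / (u1 * v2 - u2 * v1).
exists (a.1 + t * u1, a.2 + t * u2) => /=; split.
  rewrite /u1 /u2; ring.
rewrite /t /u1 /u2 /v1 /v2 in hd *; field; fside.
Qed.

End Real.

Section Trans.
Variable R : realFieldType.
Variable O : point R.
Variable r : complex R.
Hypothesis hr : r != 0.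

Definition ZZ (p : point R) : complex R := Complex (p.1 - O.1) (p.2 - O.2).
Definition WW (p : point R) : complex R := Complex (p.1 - O.1) (- (p.2 - O.2)) / r.

Lemma tr_dist p q : ((dist2 p q)%:C)%C = r * dF (ZZ p) (WW p) (ZZ q) (WW q).
Proof.
rewrite /dF /WW.
transitivity ((ZZ p - ZZ q) * (Complex (p.1 - O.1) (- (p.2 - O.2)) - Complex (q.1 - O.1) (- (q.2 - O.2)))); last by field; fside.
apply/eqP; rewrite eq_complex /=; apply/andP; split; apply/eqP; rewrite /dist2; ring.
Qed.

Lemma realC_inj (x y : R) : ((x%:C)%C : complex R) = (y%:C)%C -> x = y.
Proof. by case. Qed.

Lemma tr_deq p q p' q' : dist2 p q = dist2 p' q' <-> dF (ZZ p) (WW p) (ZZ q) (WW q) = dF (ZZ p') (WW p') (ZZ q') (WW q').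
Proof.
split => [H|H].
  by apply: (mulfI hr); rewrite -!tr_dist H.
by apply: realC_inj; rewrite !tr_dist H.
Qed.

Lemma tr_col p q s : collinear p q s <-> cF (ZZ p) (WW p) (ZZ q) (WW q) (ZZ s) (WW s) = 0.
Proof.
set e := (q.1 - p.1) * (s.2 - p.2) - (q.2 - p.2) * (s.1 - p.1).
have E : cF (ZZ p) (WW p) (ZZ q) (WW q) (ZZ s) (WW s) = Complex 0 (- (2%:R * e)) / r.
  transitivity ((ZZ q - ZZ p) * (Complex (s.1 - O.1) (- (s.2 - O.2)) - Complex (p.1 - O.1) (- (p.2 - O.2))) / r
     - (Complex (q.1 - O.1) (- (q.2 - O.2)) - Complex (p.1 - O.1) (- (p.2 - O.2))) * (ZZ s - ZZ p) / r).
    by rewrite /cF /WW; field; fside.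
  rewrite -mulrBl; congr (_ / _).
  apply/eqP; rewrite eq_complex /=; apply/andP; split; apply/eqP; rewrite /e; ring.
rewrite /collinear -/e E; split => [->|H].
  by rewrite mulr0 oppr0 mul0r.
have : Complex 0 (- (2%:R * e)) = (0 : complex R).
  by apply: (mulIf (invr_neq0 hr)); rewrite H mul0r.
case => /eqP; rewrite oppr_eq0 mulf_eq0 pnatr_eq0 /= => /eqP.
by [].
Qed.



Lemma ZZO : ZZ O = 0.
Proof. by rewrite /ZZ !subrr. Qed.
Lemma WWO : WW O = 0.
Proof. by rewrite /WW !subrr oppr0 mul0r. Qed.

Lemma ZZ_inj p q : ZZ p = ZZ q -> p = q.
Proof.
case => /eqP h1 /eqP h2; move: h1 h2; rewrite !(can2_eq (subrK _) (addrK _)) => /eqP h1 /eqP h2.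
by case: p q h1 h2 => [x y] [x' y'] /=; rewrite !subrK => -> ->.
Qed.

Lemma tr_par a b c d : parallel a b c d <->
  (ZZ b - ZZ a) * (WW d - WW c) - (WW b - WW a) * (ZZ d - ZZ c) = 0.
Proof.
set e := (b.1 - a.1) * (d.2 - c.2) - (b.2 - a.2) * (d.1 - c.1).
have E : (ZZ b - ZZ a) * (WW d - WW c) - (WW b - WW a) * (ZZ d - ZZ c) = Complex 0 (- (2%:R * e)) / r.
  transitivity ((ZZ b - ZZ a) * (Complex (d.1 - O.1) (- (d.2 - O.2)) - Complex (c.1 - O.1) (- (c.2 - O.2))) / r
     - (Complex (b.1 - O.1) (- (b.2 - O.2)) - Complex (a.1 - O.1) (- (a.2 - O.2))) * (ZZ d - ZZ c) / r).
    by rewrite /WW; field; fside.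
  rewrite -mulrBl; congr (_ / _).
  apply/eqP; rewrite eq_complex /=; apply/andP; split; apply/eqP; rewrite /e; ring.
rewrite /parallel -/e E; split => [->|H].
  by rewrite mulr0 oppr0 mul0r.
have : Complex 0 (- (2%:R * e)) = (0 : complex R).
  by apply: (mulIf (invr_neq0 hr)); rewrite H mul0r.
case => /eqP; rewrite oppr_eq0 mulf_eq0 pnatr_eq0 /= => /eqP.
by [].
Qed.

Lemma ZZ_neq p q : p <> q -> ZZ p != ZZ q.
Proof. by move=> h; apply/negP => /eqP /ZZ_inj. Qed.

Lemma Kdiff p q : p <> q -> ZZ p - ZZ q != 0 /\ WW p - WW q != 0.
Proof.
move=> h.
have hd : dist2 p q != 0 by apply/negP => /eqP /dist2_eq0.
have : r * dF (ZZ p) (WW p) (ZZ q) (WW q) != 0.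
  rewrite -tr_dist; apply/negP => /eqP; rewrite -[0]/((0%:C)%C) => /realC_inj /eqP.
  by rewrite (negbTE hd).
by rewrite /dF !mulf_eq0 negb_or negb_or => /andP[_ /andP[-> ->]].
Qed.

End Trans.


Ltac is_lit x := lazymatch x with O => idtac | S ?p => is_lit p end.
Ltac norm5 := repeat (match goal with
 | |- context[((?x + ?y) %% 5)%N] => is_lit x; is_lit y;
     let v := eval vm_compute in ((x + y) %% 5)%N in change ((x + y) %% 5)%N with v
 | H : context[((?x + ?y) %% 5)%N] |- _ => is_lit x; is_lit y;
     let v := eval vm_compute in ((x + y) %% 5)%N in change ((x + y) %% 5)%N with v in H
 end).

Section Core.
Variable F : fieldType.
Variables zA wA zB wB zK wK zC wC zL wL : 'I_5 -> F.
Local Notation b j k := (zB (nx j k)).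

Hypothesis hBw : forall i, zB i * wB i = 1.
Hypothesis hBd : forall i j, i != j -> zB i != zB j.
Hypothesis hLA : forall j,
  cF (zA (nx j 0)) (wA (nx j 0)) (zB (nx j 0)) (wB (nx j 0)) (zB (nx j 2)) (wB (nx j 2)) = 0 /\
  cF (zA (nx j 0)) (wA (nx j 0)) (zB (nx j 1)) (wB (nx j 1)) (zB (nx j 3)) (wB (nx j 3)) = 0.
Hypothesis hKn : forall i,
  cF (zA i) (wA i) (zA (nx i 1)) (wA (nx i 1)) (zB (nx i 2)) (wB (nx i 2)) != 0.
Hypothesis hK : forall i,
  dF (zK (nx i 2)) (wK (nx i 2)) (zA i) (wA i) = dF (zK (nx i 2)) (wK (nx i 2)) (zB (nx i 2)) (wB (nx i 2)) /\
  dF (zK (nx i 2)) (wK (nx i 2)) (zA (nx i 1)) (wA (nx i 1)) = dF (zK (nx i 2)) (wK (nx i 2)) (zB (nx i 2)) (wB (nx i 2)).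
Hypothesis hKK : forall i,
  zK (nx i 3) - zK (nx i 2) != 0 /\ wK (nx i 3) - wK (nx i 2) != 0.
Hypothesis hCA : forall i, zC (nx i 1) != zA (nx i 1).
Hypothesis hC : forall i,
  dF (zK (nx i 2)) (wK (nx i 2)) (zC (nx i 1)) (wC (nx i 1)) = dF (zK (nx i 2)) (wK (nx i 2)) (zA (nx i 1)) (wA (nx i 1)) /\
  dF (zK (nx i 3)) (wK (nx i 3)) (zC (nx i 1)) (wC (nx i 1)) = dF (zK (nx i 3)) (wK (nx i 3)) (zA (nx i 1)) (wA (nx i 1)).
Hypothesis hLn : forall i,
  cF (zC (nx i 1)) (wC (nx i 1)) (zB (nx i 2)) (wB (nx i 2)) (zB (nx i 3)) (wB (nx i 3)) != 0.
Hypothesis hL : forall i,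
  dF (zL i) (wL i) (zC (nx i 1)) (wC (nx i 1)) = dF (zL i) (wL i) (zB (nx i 3)) (wB (nx i 3)) /\
  dF (zL i) (wL i) (zB (nx i 2)) (wB (nx i 2)) = dF (zL i) (wL i) (zB (nx i 3)) (wB (nx i 3)).

Lemma hB0 i : zB i != 0.
Proof. by apply/negP => /eqP h; move: (hBw i); rewrite h mul0r => /eqP; rewrite eq_sym oner_eq0. Qed.

Lemma hwB i : wB i = (zB i)^-1.
Proof. by apply: (mulfI (hB0 i)); rewrite hBw mulfV ?hB0. Qed.

Lemma bd j x y : (x < 5)%N -> (y < 5)%N -> x != y -> b j x != b j y.
Proof. by move=> hx hy hxy; apply: hBd; apply: nx_neq. Qed.

Ltac bdt := first [ exact: hB0 | (apply: bd; done) ].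

Lemma stepA j : [/\ b j 0 * b j 2 - b j 1 * b j 3 != 0,
  zA (nx j 0) = Af (b j 0) (b j 2) (b j 1) (b j 3) & wA (nx j 0) = Abf (b j 0) (b j 2) (b j 1) (b j 3)].
Proof.
have [h1 h2] := hLA j; rewrite !hwB in h1 h2.
have e1 := line_eq (bd j (isT : (0 < 5)%N) (isT : (2 < 5)%N) isT) (hB0 _) (hB0 _) h1.
have e2 := line_eq (bd j (isT : (1 < 5)%N) (isT : (3 < 5)%N) isT) (hB0 _) (hB0 _) h2.
by apply: A_solve e1 e2; apply: bd.
Qed.


Lemma chs j : [/\ b j 0 * b j 2 - b j 1 * b j 3 != 0, b j 1 * b j 3 - b j 2 * b j 4 != 0,
  b j 2 * b j 4 - b j 3 * b j 0 != 0, b j 3 * b j 0 - b j 4 * b j 1 != 0 &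
  b j 4 * b j 1 - b j 0 * b j 2 != 0].
Proof.
have [c0 _ _] := stepA j.
have [c1 _ _] := stepA (nx j 1).
have [c2 _ _] := stepA (nx j 2).
have [c3 _ _] := stepA (nx j 3).
have [c4 _ _] := stepA (nx j 4).
rewrite !nxE /= in c1 c2 c3 c4.
by split.
Qed.

Lemma stepK j : zK (nx j 0) = Kf (b j 0) (b j 3) (b j 2) (b j 4) (b j 1) /\
                wK (nx j 0) = Kbf (b j 0) (b j 3) (b j 2) (b j 4) (b j 1).
Proof.
have [e1 e2] := hK (nx j 3).
have hn := hKn (nx j 3).
rewrite !nxE /= in e1 e2 hn.
have [_ a3 ab3] := stepA (nx j 3); have [_ a4 ab4] := stepA (nx j 4).
rewrite !nxE /= in a3 ab3 a4 ab4.
rewrite a3 ab3 a4 ab4 !hwB in e1 e2 hn.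
have [_ _ _ c3 c4] := chs j.
have [k1 k2] := KEQ (hB0 (nx j 0)) (hB0 (nx j 1)) (hB0 (nx j 2)) (hB0 (nx j 3)) (hB0 (nx j 4)) c3 c4.
by apply: (cc_uniq hn e1 e2) => //.
Qed.

Lemma stepD j : Df (b j 4) (b j 0) (b j 1) (b j 2) (b j 3) != 0 /\ Dbf (b j 4) (b j 0) (b j 1) (b j 2) (b j 3) != 0.
Proof.
have [n1 n2] := hKK (nx j 4).
rewrite !nxE /= in n1 n2.
have [k1 kb1] := stepK (nx j 1); have [k2 kb2] := stepK (nx j 2).
rewrite !nxE /= in k1 kb1 k2 kb2.
rewrite k1 kb1 k2 kb2 in n1 n2.
have [c0 c1 _ _ c4] := chs j.
have [e1 e2] := KD (hB0 (nx j 0)) (hB0 (nx j 1)) (hB0 (nx j 2)) (hB0 (nx j 3)) (hB0 (nx j 4)) c4 c1 c0.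
have hp : (b j 4 * b j 1 - b j 0 * b j 2) * (b j 4 * b j 2 - b j 1 * b j 3) * (b j 0 * b j 2 - b j 1 * b j 3) != 0.
  by nz.
split; apply/negP => /eqP hD.
  by move: e1; rewrite hD mulr0 => /eqP; rewrite mulf_eq0 (negbTE n2) (negbTE hp).
by move: e2; rewrite hD mulr0 => /eqP; rewrite mulf_eq0 (negbTE n1) (negbTE hp).
Qed.


Lemma stepC j :
  zC (nx j 0) = Nf (b j 4) (b j 0) (b j 1) (b j 2) (b j 3) / Df (b j 4) (b j 0) (b j 1) (b j 2) (b j 3) /\
  wC (nx j 0) = Nbf (b j 4) (b j 0) (b j 1) (b j 2) (b j 3) / Dbf (b j 4) (b j 0) (b j 1) (b j 2) (b j 3).
Proof.
have [e1 e2] := hC (nx j 4).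
have hca := hCA (nx j 4).
have [n1 n2] := hKK (nx j 4).
rewrite !nxE /= in e1 e2 hca n1 n2.
have [E1 E2] := circ2 n1 n2 e1 e2 hca.
have [k1 kb1] := stepK (nx j 1); have [k2 kb2] := stepK (nx j 2).
have [_ a0 ab0] := stepA j.
rewrite !nxE /= in k1 kb1 k2 kb2.
rewrite k1 kb1 k2 kb2 a0 ab0 in E1 E2 n1 n2.
have [c0 c1 _ _ c4] := chs j.
have [d1 d2] := stepD j.
have [F1 F2] := CFORM (hB0 (nx j 0)) (hB0 (nx j 1)) (hB0 (nx j 2)) (hB0 (nx j 3)) (hB0 (nx j 4)) c4 c1 c0 d1 d2.
split.
  apply: (addIr (- Kf (b j 1) (b j 4) (b j 3) (b j 0) (b j 2))).
  by apply: (mulIf n2); rewrite E1 F1.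
apply: (addIr (- Kbf (b j 1) (b j 4) (b j 3) (b j 0) (b j 2))).
by apply: (mulIf n1); rewrite E2 F2.
Qed.

Lemma stepL i : [/\ zL (nx i 0) = Lf (b i 1) (b i 2) (b i 3) (b i 4),
  wL (nx i 0) = Lbf (b i 1) (b i 2) (b i 3) (b i 4) &
  b i 1 * b i 3 * b i 3 - b i 2 * b i 2 * b i 4 != 0].
Proof.
have [e1 e2] := hL (nx i 0).
have hn := hLn (nx i 0).
have [c c'] := stepC (nx i 1).
rewrite !nxE /= in e1 e2 hn c c'.
rewrite c c' !hwB in e1 e2 hn.
have [d1 d2] := stepD (nx i 1).
rewrite !nxE /= in d1 d2.
have [_ c1 _ _ _] := chs i.
have L1 := LEQ (hB0 (nx i 0)) (hB0 (nx i 1)) (hB0 (nx i 2)) (hB0 (nx i 3)) (hB0 (nx i 4)) d1 d2.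
have L2 := LEQ2 (b i 1) (b i 4) (hB0 (nx i 2)) (hB0 (nx i 3)).
have [hT -> ->] := cc_hom hn e1 e2 L1 L2 c1.
by split.
Qed.

Hypothesis hCnc : exists a c d, cF (zC a) (wC a) (zC c) (wC c) (zC d) (wC d) != 0.
Hypothesis hKLnp : exists i j, (zL i - zK i) * (wL j - wK j) - (wL i - wK i) * (zL j - zK j) != 0.

Definition P0 := cyc (@pt F) (b ord0 0) (b ord0 1) (b ord0 2) (b ord0 3) (b ord0 4).
Definition Pb0 := cyc (@pbt F) (b ord0 0) (b ord0 1) (b ord0 2) (b ord0 3) (b ord0 4).
Definition Q0 := cyc (@qt F) (b ord0 0) (b ord0 1) (b ord0 2) (b ord0 3) (b ord0 4).
Definition QX0 := cyc (@xt F) (b ord0 0) (b ord0 1) (b ord0 2) (b ord0 3) (b ord0 4).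
Definition S0 := Q0 - QX0.
Definition Nn j := Nf (b j 4) (b j 0) (b j 1) (b j 2) (b j 3).
Definition Dn j := Df (b j 4) (b j 0) (b j 1) (b j 2) (b j 3).
Definition Nbn j := Nbf (b j 4) (b j 0) (b j 1) (b j 2) (b j 3).
Definition Dbn j := Dbf (b j 4) (b j 0) (b j 1) (b j 2) (b j 3).

Lemma cycI t j : cyc t (b j 0) (b j 1) (b j 2) (b j 3) (b j 4) = cyc t (b ord0 0) (b ord0 1) (b ord0 2) (b ord0 3) (b ord0 4).
Proof. exact: cyc_idx. Qed.

Lemma cycI' t j : cyc t (b j 4) (b j 0) (b j 1) (b j 2) (b j 3) = cyc t (b ord0 0) (b ord0 1) (b ord0 2) (b ord0 3) (b ord0 4).
Proof. by rewrite -(cyc_rot t (b j 4)) cycI. Qed.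

Lemma Cval j : zC j = Nn j / Dn j /\ wC j = Nbn j / Dbn j.
Proof.
have [e1 e2] := stepC j.
by split; [rewrite -{1}(nx0 j) e1 | rewrite -{1}(nx0 j) e2].
Qed.

Lemma Dnz j : Dn j != 0 /\ Dbn j != 0.
Proof. exact: stepD. Qed.

Lemma CIj j : (zC j * Q0 - P0) * Dn j = S0 * Dbn j /\ (wC j * Q0 + Pb0) * Dbn j = S0 * Dn j.
Proof.
have [c1 c2] := Cval j; have [d1 d2] := Dnz j.
have e1 := CI1 (b j 4) (b j 0) (b j 1) (b j 2) (b j 3).
have e2 := CI2 (b j 4) (b j 0) (b j 1) (b j 2) (b j 3).
move: e1 e2; rewrite /Sf /Qf /Pf /QXf /Pbf !cycI' -/Q0 -/P0 -/QX0 -/Pb0 -/S0 => e1 e2.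
rewrite c1 c2; split.
  by rewrite -e1 /Nn /Dn /Dbn; field.
by rewrite -e2 /Nbn /Dn /Dbn; field.
Qed.

Lemma DI12 a : (exists g, (zC (nx a 1) - zC a) * (Dn a * Dn (nx a 1)) = S0 * g /\
                          (wC (nx a 1) - wC a) * (Dbn a * Dbn (nx a 1)) = - (S0 * g)) /\
               (exists g, (zC (nx a 2) - zC a) * (Dn a * Dn (nx a 2)) = S0 * g /\
                          (wC (nx a 2) - wC a) * (Dbn a * Dbn (nx a 2)) = - (S0 * g)).
Proof.
have [e1 e2 e3 e4] := DI (b a 0) (b a 1) (b a 2) (b a 3) (b a 4).
move: e1 e2 e3 e4; rewrite /Sf /Qf /QXf !cycI -/Q0 -/QX0 -/S0 => e1 e2 e3 e4.
have [ca cba] := Cval a; have [c1 cb1] := Cval (nx a 1); have [c2 cb2] := Cval (nx a 2).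
have [da dba] := Dnz a; have [d1 db1] := Dnz (nx a 1); have [d2 db2] := Dnz (nx a 2).
rewrite ca cba c1 cb1 c2 cb2.
move: d1 db1 d2 db2; rewrite /Nn /Dn /Nbn /Dbn !nxE in ca cba c1 cb1 c2 cb2 * => d1 db1 d2 db2.
norm5.
split.
  exists ((b a 1 - b a 2) * (b a 2 - b a 3)); split.
    by rewrite -e1; field; fside.
  by rewrite -e2; field; fside.
exists (- ((b a 1 - b a 4) * (b a 2 - b a 3))); split.
  by rewrite mulrN -e3; field; fside.
by rewrite mulrN opprK -e4; field; fside.
Qed.

Lemma DIg a c : a != c -> exists g, (zC c - zC a) * (Dn a * Dn c) = S0 * g /\
                          (wC c - wC a) * (Dbn a * Dbn c) = - (S0 * g).
Proof.
have sym : forall x y, (exists g, (zC y - zC x) * (Dn x * Dn y) = S0 * g /\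
                          (wC y - wC x) * (Dbn x * Dbn y) = - (S0 * g)) ->
   exists g, (zC x - zC y) * (Dn y * Dn x) = S0 * g /\ (wC x - wC y) * (Dbn y * Dbn x) = - (S0 * g).
  move=> x y [g [e1 e2]]; exists (- g); split.
    have -> : (zC x - zC y) * (Dn y * Dn x) = - ((zC y - zC x) * (Dn x * Dn y)) by ring.
    by rewrite e1 mulrN.
  have -> : (wC x - wC y) * (Dbn y * Dbn x) = - ((wC y - wC x) * (Dbn x * Dbn y)) by ring.
  by rewrite e2 mulrN.
move/ord5_cases => [->|->|->|->].
- exact: (DI12 a).1.
- exact: (DI12 a).2.
- exact: sym (DI12 c).1.
- exact: sym (DI12 c).2.
Qed.

Lemma cF_eq12 (x y u v : F) : cF x y x y u v = 0.
Proof. rewrite /cF; ring. Qed.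
Lemma cF_eq13 (x y u v : F) : cF x y u v x y = 0.
Proof. rewrite /cF; ring. Qed.
Lemma cF_eq23 (x y u v : F) : cF u v x y x y = 0.
Proof. rewrite /cF; ring. Qed.

Lemma stepQ : Q0 != 0.
Proof.
have [a [c [d hcf]]] := hCnc.
have [ac|hac] := eqVneq a c; first by rewrite ac cF_eq12 eqxx in hcf.
have [ad|had] := eqVneq a d; first by rewrite ad cF_eq13 eqxx in hcf.
have [cd|hcd] := eqVneq c d; first by rewrite cd cF_eq23 eqxx in hcf.
have [g1 [h1 h2]] := DIg hac.
have [g2 [h3 h4]] := DIg had.
have [da dba] := Dnz a; have [dc dbc] := Dnz c; have [dd dbd] := Dnz d.
have [hb _] := CIj c; have [hc _] := CIj d.
exact: (Qnz da dc dd dba dbc dbd h1 h2 h3 h4 hb hc hcf).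
Qed.

Definition lam j := (b j 0 - b j 1) * (b j 0 - b j 4) * (b j 1 * b j 3 * b j 3 - b j 2 * b j 2 * b j 4).

Lemma XIk j : lam j != 0 /\ P0 - zK j * QX0 = lam j * (zL j - zK j) /\ - Pb0 - wK j * QX0 = lam j * (wL j - wK j).
Proof.
have [k0 kb0] := stepK j; have [l0 lb0 d3] := stepL j.
have k : zK j = Kf (b j 0) (b j 3) (b j 2) (b j 4) (b j 1) by rewrite -{1}(nx0 j) k0.
have kb : wK j = Kbf (b j 0) (b j 3) (b j 2) (b j 4) (b j 1) by rewrite -{1}(nx0 j) kb0.
have l : zL j = Lf (b j 1) (b j 2) (b j 3) (b j 4) by rewrite -{1}(nx0 j) l0.
have lb : wL j = Lbf (b j 1) (b j 2) (b j 3) (b j 4) by rewrite -{1}(nx0 j) lb0.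
have [_ _ _ c3 c4] := chs j.
have [e1 e2] := XI (hB0 (nx j 0)) (hB0 (nx j 1)) (hB0 (nx j 2)) (hB0 (nx j 3)) (hB0 (nx j 4)) c3 c4 d3.
move: e1 e2; rewrite /Pf /Pbf /QXf !cycI -/P0 -/Pb0 -/QX0 => e1 e2.
have hl : lam j != 0.
  rewrite /lam; apply: mulf_neq0; [apply: mulf_neq0|done]; rewrite subr_eq0; apply: bd => //.
by rewrite k kb l lb /lam; split.
Qed.

Lemma stepQX : QX0 != 0.
Proof.
have [i [j hp]] := hKLnp.
have [l1 [e1 e2]] := XIk i; have [l2 [e3 e4]] := XIk j.
exact: (QXnz l1 l2 e1 e2 e3 e4 hp).
Qed.

Lemma core : [/\ Q0 != 0, QX0 != 0,
  forall k, dF (P0 / Q0) (- Pb0 / Q0) (zC k) (wC k) = S0 ^+ 2 / Q0 ^+ 2 &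
  forall k, cF (zK k) (wK k) (zL k) (wL k) (P0 / QX0) (- Pb0 / QX0) = 0].
Proof.
split; [exact: stepQ | exact: stepQX | move=> k | move=> k].
  have [d db] := Dnz k; have [e1 e2] := CIj k.
  exact: (Jform stepQ d db e1 e2).
have [_ [e1 e2]] := XIk k.
exact: (Xform stepQX e1 e2).
Qed.

End Core.



Unset Implicit Arguments.
Set Strict Implicit.

Theorem theorem2p3 (R : realFieldType)
  (A B K C L : 'I_5 -> point R) (O : point R) :
  (* B_{i+3} = intersection of lines A_iA_{i+1} and A_{i+2}A_{i+3},
     these lines existing and being non-parallel *)
  (forall i, A i <> A (nx i 1)) ->
  (forall i, ~ parallel (A i) (A (nx i 1)) (A (nx i 2)) (A (nx i 3))) ->
  (forall i, collinear (A i) (A (nx i 1)) (B (nx i 3)) /\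
             collinear (A (nx i 2)) (A (nx i 3)) (B (nx i 3))) ->
  (* K_{i+2} = circumcenter of the (nondegenerate) triangle A_i A_{i+1} B_{i+2} *)
  (forall i, ~ collinear (A i) (A (nx i 1)) (B (nx i 2))) ->
  (forall i, dist2 (K (nx i 2)) (A i) = dist2 (K (nx i 2)) (B (nx i 2)) /\
             dist2 (K (nx i 2)) (A (nx i 1)) = dist2 (K (nx i 2)) (B (nx i 2))) ->
  (* C_{i+1} = second intersection (other than A_{i+1}) of the distinct
     circles (A_i A_{i+1} B_{i+2}) and (A_{i+1} A_{i+2} B_{i+3}),
     whose centers are K_{i+2} and K_{i+3} *)
  (forall i, K (nx i 2) <> K (nx i 3)) ->
  (forall i, C (nx i 1) <> A (nx i 1)) ->
  (forall i, dist2 (K (nx i 2)) (C (nx i 1)) = dist2 (K (nx i 2)) (A (nx i 1)) /\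
             dist2 (K (nx i 3)) (C (nx i 1)) = dist2 (K (nx i 3)) (A (nx i 1))) ->
  (* L_i = circumcenter of the (nondegenerate) triangle C_{i+1} B_{i+2} B_{i+3} *)
  (forall i, ~ collinear (C (nx i 1)) (B (nx i 2)) (B (nx i 3))) ->
  (forall i, dist2 (L i) (C (nx i 1)) = dist2 (L i) (B (nx i 3)) /\
             dist2 (L i) (B (nx i 2)) = dist2 (L i) (B (nx i 3))) ->
  (* B_1, ..., B_5 lie on a circle with center O *)
  (forall i j, dist2 O (B i) = dist2 O (B j)) ->
  (* nondegeneracy: the lines K_iL_i exist, the circle through the C_i is
     determined by them, and the common point X of the lines K_iL_i is
     well defined (not all these lines are parallel/equal) *)
  (forall i, K i <> L i) ->
  (exists i j k, ~ collinear (C i) (C j) (C k)) ->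
  (exists i j, ~ parallel (K i) (L i) (K j) (L j)) ->
  (* conclusion: the C_i are concyclic (center J), the lines K_iL_i are
     concurrent (at X), and O, J, X are collinear *)
  (exists J : point R, forall i j, dist2 J (C i) = dist2 J (C j)) /\
  (exists X : point R, forall i, collinear (K i) (L i) X) /\
  (forall J X : point R,
     (forall i j, dist2 J (C i) = dist2 J (C j)) ->
     (forall i, collinear (K i) (L i) X) ->
     collinear O J X).
Proof.
move=> hA1 hApar hAB hAAB hKd hKK hCA hCd hCBB hLd hBO hKL hCnc hKLnp.
have hBB1 : forall i, B (nx i 0) <> B (nx i 1).
  move=> i e; apply: (hCBB (nx i 3)); rewrite !nxE; norm5.
  by rewrite e; apply: col_eq23.
pose r : complex R := ((dist2 O (B ord0))%:C)%C.
have hr : r != 0.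
  apply/negP => /eqP hr0.
  have h0 : dist2 O (B ord0) = 0 := realC_inj hr0.
  have e : forall i, B i = O by move=> i; apply: esym; apply: dist2_eq0; rewrite (hBO i ord0).
  by apply: (hBB1 ord0); rewrite !e.
have hBw : forall i, ZZ O (B i) * WW O r (B i) = 1.
  move=> i; have := tr_dist O hr O (B i).
  rewrite (hBO i ord0) -/r ZZO WWO /dF !sub0r mulrNN => e.
  by apply: (mulfI hr); rewrite -e mulr1.
have hLAr : forall j, collinear (A (nx j 0)) (B (nx j 0)) (B (nx j 2)) /\
                      collinear (A (nx j 0)) (B (nx j 1)) (B (nx j 3)).
  move=> j; split.
    have h1 := (hAB (nx j 4)).1; have h2 := (hAB (nx j 2)).2; have hne := hA1 (nx j 4).
    rewrite !nxE in h1 h2 hne; norm5.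
    apply: col_13; apply: (col_trans (fun e => hne (esym e))); exact: col_21.
  have h1 := (hAB (nx j 0)).1; have h2 := (hAB (nx j 3)).2; have hne := hA1 (nx j 0).
  rewrite !nxE in h1 h2 hne; norm5.
  exact: (col_trans hne h2 h1).
have hBB2' : forall i, B (nx i 1) <> B (nx i 3).
  move=> i e.
  have hnc : ~ collinear (A (nx i 2)) (A (nx i 3)) (A (nx i 4)).
    move=> hc; apply: (hAAB (nx i 2)).
    have h1 := (hAB (nx i 1)).2; have hne := hA1 (nx i 3).
    rewrite !nxE in h1 hne; norm5; rewrite !nxE; norm5.
    apply: col_21; exact: (col_trans hne (col_231 hc) h1).
  have hP : B (nx i 3) = A (nx i 3).
    apply: (col_uniq hnc); first exact: (hAB i).2.
    have h1 := (hAB (nx i 3)).1; rewrite !nxE in h1; norm5.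
    by rewrite -e.
  have [k1 k2] := hKd (nx i 1); have [k3 k4] := hKd (nx i 2); have [c1 c2] := hCd (nx i 1).
  have hkk := hKK (nx i 1); have hca := hCA (nx i 1); have ha23 := hA1 (nx i 2).
  rewrite !nxE in k1 k2 k3 k4 c1 c2 hkk hca ha23; norm5.
  have a1 : dist2 (K (nx i 3)) (A (nx i 3)) = dist2 (K (nx i 3)) (A (nx i 2)) by rewrite -hP k2.
  have a2 : dist2 (K (nx i 4)) (A (nx i 3)) = dist2 (K (nx i 4)) (A (nx i 2)) by rewrite k3 k4.
  have [n1 n2] := Kdiff O hr (fun e => hkk (esym e)).
  have [E1 _] := circ2 n1 n2 (proj1 (tr_deq O hr _ _ _ _) c1) (proj1 (tr_deq O hr _ _ _ _) c2) (ZZ_neq O hca).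
  have [E2 _] := circ2 n1 n2 (proj1 (tr_deq O hr _ _ _ _) a1) (proj1 (tr_deq O hr _ _ _ _) a2) (ZZ_neq O (fun e => ha23 (esym e))).
  have eC : C (nx i 2) = A (nx i 3).
    apply: (ZZ_inj (O := O)); apply: (addIr (- ZZ O (K (nx i 3)))); apply: (mulIf n2).
    by rewrite E1 E2.
  apply: (hCBB (nx i 1)); rewrite !nxE; norm5.
  by rewrite eC -hP; apply: col_eq12.
have hBB2 : forall i, B (nx i 0) <> B (nx i 2).
  by move=> i; have := hBB2' (nx i 4); rewrite !nxE; norm5.
have hBd : forall i j : 'I_5, i != j -> ZZ O (B i) != ZZ O (B j).
  move=> i j hij; apply: ZZ_neq.
  case/ord5_cases: hij => ->.
  - by have := hBB1 i; rewrite nx0.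
  - by have := hBB2 i; rewrite nx0.
  - by move=> e; apply: (hBB1 j); rewrite nx0 e.
  - by move=> e; apply: (hBB2 j); rewrite nx0 e.
pose zA := fun i => ZZ O (A i); pose wA := fun i => WW O r (A i).
pose zB := fun i => ZZ O (B i); pose wB := fun i => WW O r (B i).
pose zK := fun i => ZZ O (K i); pose wK := fun i => WW O r (K i).
pose zC := fun i => ZZ O (C i); pose wC := fun i => WW O r (C i).
pose zL := fun i => ZZ O (L i); pose wL := fun i => WW O r (L i).
have hBw' : forall i, zB i * wB i = 1 by exact: hBw.
have hBd' : forall i j : 'I_5, i != j -> zB i != zB j by exact: hBd.
have hLA : forall j,
  cF (zA (nx j 0)) (wA (nx j 0)) (zB (nx j 0)) (wB (nx j 0)) (zB (nx j 2)) (wB (nx j 2)) = 0 /\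
  cF (zA (nx j 0)) (wA (nx j 0)) (zB (nx j 1)) (wB (nx j 1)) (zB (nx j 3)) (wB (nx j 3)) = 0.
  by move=> j; have [h1 h2] := hLAr j; split; apply/(tr_col O hr).
have hKn : forall i,
  cF (zA i) (wA i) (zA (nx i 1)) (wA (nx i 1)) (zB (nx i 2)) (wB (nx i 2)) != 0.
  by move=> i; apply/eqP => h; apply: (hAAB i); apply/(tr_col O hr).
have hK : forall i,
  dF (zK (nx i 2)) (wK (nx i 2)) (zA i) (wA i) = dF (zK (nx i 2)) (wK (nx i 2)) (zB (nx i 2)) (wB (nx i 2)) /\
  dF (zK (nx i 2)) (wK (nx i 2)) (zA (nx i 1)) (wA (nx i 1)) = dF (zK (nx i 2)) (wK (nx i 2)) (zB (nx i 2)) (wB (nx i 2)).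
  by move=> i; have [h1 h2] := hKd i; split; apply/(tr_deq O hr).
have hKK' : forall i,
  zK (nx i 3) - zK (nx i 2) != 0 /\ wK (nx i 3) - wK (nx i 2) != 0.
  by move=> i; exact: (Kdiff O hr (fun e => hKK i (esym e))).
have hCA' : forall i, zC (nx i 1) != zA (nx i 1) by move=> i; exact: (ZZ_neq O (hCA i)).
have hC : forall i,
  dF (zK (nx i 2)) (wK (nx i 2)) (zC (nx i 1)) (wC (nx i 1)) = dF (zK (nx i 2)) (wK (nx i 2)) (zA (nx i 1)) (wA (nx i 1)) /\
  dF (zK (nx i 3)) (wK (nx i 3)) (zC (nx i 1)) (wC (nx i 1)) = dF (zK (nx i 3)) (wK (nx i 3)) (zA (nx i 1)) (wA (nx i 1)).
  by move=> i; have [h1 h2] := hCd i; split; apply/(tr_deq O hr).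
have hLn : forall i,
  cF (zC (nx i 1)) (wC (nx i 1)) (zB (nx i 2)) (wB (nx i 2)) (zB (nx i 3)) (wB (nx i 3)) != 0.
  by move=> i; apply/eqP => h; apply: (hCBB i); apply/(tr_col O hr).
have hL : forall i,
  dF (zL i) (wL i) (zC (nx i 1)) (wC (nx i 1)) = dF (zL i) (wL i) (zB (nx i 3)) (wB (nx i 3)) /\
  dF (zL i) (wL i) (zB (nx i 2)) (wB (nx i 2)) = dF (zL i) (wL i) (zB (nx i 3)) (wB (nx i 3)).
  by move=> i; have [h1 h2] := hLd i; split; apply/(tr_deq O hr).
have hCnc' : exists a c d, cF (zC a) (wC a) (zC c) (wC c) (zC d) (wC d) != 0.
  have [a [c [d h]]] := hCnc; exists a, c, d; apply/eqP => e; apply: h; apply/(tr_col O hr).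
  exact: e.
have hKLnp' : exists i j, (zL i - zK i) * (wL j - wK j) - (wL i - wK i) * (zL j - zK j) != 0.
  have [i [j h]] := hKLnp; exists i, j; apply/eqP => e; apply: h; apply/(tr_par O hr).
  exact: e.
have [hQ hQX hJ hX] := core hBw' hBd' hLA hKn hK hKK' hCA' hC hLn hL hCnc' hKLnp'.
have [a [c [d hacd]]] := hCnc.
have hcf : cF (zC a) (wC a) (zC c) (wC c) (zC d) (wC d) != 0.
  by apply/eqP => e; apply: hacd; apply/(tr_col O hr).
have Jid : forall J : point R, dist2 J (C a) = dist2 J (C d) -> dist2 J (C c) = dist2 J (C d) ->
    ZZ O J = P0 zB / Q0 zB /\ WW O r J = - Pb0 zB / Q0 zB.
  move=> J e1 e2.
  have f1 := proj1 (tr_deq O hr _ _ _ _) e1; have f2 := proj1 (tr_deq O hr _ _ _ _) e2.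
  exact: (cc_uniq hcf f1 f2 (etrans (hJ a) (esym (hJ d))) (etrans (hJ c) (esym (hJ d)))).
have [i [j hij]] := hKLnp.
have hpar : (zL i - zK i) * (wL j - wK j) - (wL i - wK i) * (zL j - zK j) != 0.
  by apply/eqP => e; apply: hij; apply/(tr_par O hr).
have Xid : forall X : point R, collinear (K i) (L i) X -> collinear (K j) (L j) X ->
    ZZ O X = P0 zB / QX0 zB /\ WW O r X = - Pb0 zB / QX0 zB.
  move=> X c1 c2.
  exact: (line_uniq hpar (proj1 (tr_col O hr _ _ _) c1) (proj1 (tr_col O hr _ _ _) c2) (hX i) (hX j)).
split; last split.
- have [J0 [e1 e2]] := circumcenter_ex hacd.
  exists J0 => i' j'; apply/(tr_deq O hr).
  have [zj wj] := Jid J0 e1 e2.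
  rewrite zj wj; exact: (etrans (hJ i') (esym (hJ j'))).
- have [X0 [c1 c2]] := inter_ex hij.
  exists X0 => k; apply/(tr_col O hr).
  have [zx wx] := Xid X0 c1 c2.
  rewrite zx wx; exact: hX k.
- move=> J X hJ' hX'.
  have [zj wj] := Jid J (hJ' a d) (hJ' c d).
  have [zx wx] := Xid X (hX' i) (hX' j).
  apply/(tr_col O hr); rewrite ZZO WWO zj wj zx wx.
  exact: OJX.
Qed.
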